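(* Let $g_i:\mathbb{R}^n\to\mathbb{R}$ ($i=1,\dots,p$) and $h_j:\mathbb{R}^n\to\mathbb{R}$ ($j=p+1,\dots,q$) be locally Lipschitz, and let $\{g^i_\rho:\rho>0\}$, $\{h^j_\rho:\rho>0\}$ be families of smoothing functions of $g_i$ and $h_j$ respectively. Let $\{x_k\}\subset\mathbb{R}^n$ be a sequence, let $\rho_k>0$ with $\rho_k\uparrow\infty$, and let $\bar x$ be an accumulation point of $\{x_k\}$. Then the EWGMFCQ holds at $\bar x$ if and only if the EWNNAMCQ holds at $\bar x$ (both based on the given smoothing functions and the given sequences $\{x_k\}$, $\{\rho_k\}$).
   Context: A family $\{g_\rho:\rho>0\}$ of continuously differentiable functions $g_\rho:\mathbb{R}^n\to\mathbb{R}$ is a family of smoothing functions of a locally Lipschitz $g$ if $\lim_{z\to x,\ \rho\uparrow\infty} g_\rho(z)=g(x)$ for every $x\in\mathbb{R}^n$. Throughout, ''subsequence index sets'' $K_0\subset K\subset\mathbb{N}$ are infinite. Call a pair $K_0\subset K\subset\mathbb{N}$ admissible at $\bar x$ if $\lim_{k\to\infty,k\in K}x_k=\bar x$ and the limits $v_i=\lim_{k\to\infty,k\in K_0}\nabla g^i_{\rho_k}(x_k)$ ($i=1,\dots,p$) and $v_j=\lim_{k\to\infty,k\in K_0}\nabla h^j_{\rho_k}(x_k)$ ($j=p+1,\dots,q$) exist. EWNNAMCQ holds at $\bar x$ if for every admissible pair with limits $v_1,\dots,v_q$: whenever $\lambda\in\mathbb{R}^q$ satisfies $0=\sum_{i=1}^p\lambda_i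 v_i+\sum_{j=p+1}^q\lambda_j v_j$, $\lambda_i\ge 0$ ($i=1,\dots,p$), and $\sum_{i=1}^p\lambda_i g_i(\bar x)+\sum_{j=p+1}^q\lambda_j h_j(\bar x)\ge 0$, then $\lambda=0$. EWGMFCQ holds at $\bar x$ if for every admissible pair with limits $v_1,\dots,v_q$: (i) $v_{p+1},\dots,v_q$ are linearly independent; and (ii) there exists a direction $d\in\mathbb{R}^n$ such that $g_i(\bar x)+v_i^Td<0$ for all $i=1,\dots,p$ and $h_j(\bar x)+v_j^Td=0$ for all $j=p+1,\dots,q$. *)

(* Defs.v *)
From HB Require Import structures.
From mathcomp Require Import all_boot all_order all_algebra.
From mathcomp Require Import all_classical all_reals all_analysis.
Set Implicit Arguments. Unset Strict Implicit. Unset Printing Implicit Defensive.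
Import Order.TTheory GRing.Theory Num.Theory.
Import numFieldNormedType.Exports.
Local Open Scope classical_set_scope.
Local Open Scope ring_scope.

Section Defs.
Variables (R : realType) (n : nat).
Notation V := 'rV[R]_n.

Definition dotv (u v : V) : R := \sum_(k < n) u 0 k * v 0 k.

Definition grad (f : V -> R) (x : V) : V :=
  \row_(i < n) 'D_(delta_mx 0 i) f x.

Definition C1 (f : V -> R) : Prop :=
  (forall x, differentiable f x) /\ continuous (grad f).

Definition locally_lipschitz (f : V -> R) : Prop :=
  forall x, exists r : R, exists L : R, 0 < r /\
    forall y z, `|y - x| < r -> `|z - x| < r -> `|f y - f z| <= L * `|y - z|.

Definition smoothing_family (fs : R -> V -> R) (f : V -> R) : Prop :=
  (forall rho, 0 < rho -> C1 (fs rho)) /\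
  (forall x (eps : R), 0 < eps -> exists delta : R, exists M : R, 0 < delta /\
     forall z rho, `|z - x| < delta -> M < rho -> 0 < rho ->
       `|fs rho z - f x| < eps).

Definition lim_along {W : normedModType R} (K : set nat) (u : nat -> W) (l : W)
  : Prop :=
  forall eps : R, 0 < eps -> exists N : nat, forall k, K k -> (N <= k)%N ->
    `|u k - l| < eps.

Definition accumulation_point (x : nat -> V) (xbar : V) : Prop :=
  forall eps : R, 0 < eps -> forall N : nat, exists k, (N <= k)%N /\
    `|x k - xbar| < eps.

Definition admissible (p m : nat) (gs : 'I_p -> R -> V -> R)
  (hs : 'I_m -> R -> V -> R) (x : nat -> V) (rho : nat -> R) (xbar : V)
  (K0 K : set nat) (vg : 'I_p -> V) (vh : 'I_m -> V) : Prop :=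
  infinite_set K0 /\ infinite_set K /\ K0 `<=` K /\
  lim_along K x xbar /\
  (forall i, lim_along K0 (fun k => grad (gs i (rho k)) (x k)) (vg i)) /\
  (forall j, lim_along K0 (fun k => grad (hs j (rho k)) (x k)) (vh j)).

Definition EWNNAMCQ (p m : nat) (g : 'I_p -> V -> R) (h : 'I_m -> V -> R)
  (gs : 'I_p -> R -> V -> R) (hs : 'I_m -> R -> V -> R)
  (x : nat -> V) (rho : nat -> R) (xbar : V) : Prop :=
  forall K0 K vg vh, admissible gs hs x rho xbar K0 K vg vh ->
  forall (lg : 'I_p -> R) (lh : 'I_m -> R),
    \sum_(i < p) lg i *: vg i + \sum_(j < m) lh j *: vh j = 0 ->
    (forall i, 0 <= lg i) ->
    0 <= \sum_(i < p) lg i * g i xbar + \sum_(j < m) lh j * h j xbar ->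
    (forall i, lg i = 0) /\ (forall j, lh j = 0).

Definition EWGMFCQ (p m : nat) (g : 'I_p -> V -> R) (h : 'I_m -> V -> R)
  (gs : 'I_p -> R -> V -> R) (hs : 'I_m -> R -> V -> R)
  (x : nat -> V) (rho : nat -> R) (xbar : V) : Prop :=
  forall K0 K vg vh, admissible gs hs x rho xbar K0 K vg vh ->
    row_free (\matrix_(j < m) vh j) /\
    exists d : V,
      (forall i, g i xbar + dotv (vg i) d < 0) /\
      (forall j, h j xbar + dotv (vh j) d = 0).

End Defs.

(* Main.v *)
Require Import Defs.
From HB Require Import structures.
From mathcomp Require Import all_boot all_order all_algebra.
From mathcomp Require Import all_classical all_reals all_analysis.
From mathcomp Require Import ring lra.
Import Order.TTheory GRing.Theory Num.Theory.
Import numFieldNormedType.Exports.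
Local Open Scope classical_set_scope.
Local Open Scope ring_scope.
Set Implicit Arguments. Unset Strict Implicit.
Section FM.
Variable R : realType.
Record cns := Cns { cc : nat -> R; ca : R; cst : bool }.

Definition dot (n : nat) (c d : nat -> R) : R := \sum_(k < n) c k * d k.
Definition cval n d (k : cns) := ca k + dot n (cc k) d.
Definition sat n d k : Prop := if cst k then cval n d k < 0 else cval n d k <= 0.
Definition bad k : Prop := 0 < ca k \/ (cst k /\ 0 <= ca k).
Definition addc k t := Cns (fun i => cc k i + cc t i) (ca k + ca t) (cst k || cst t).
Definition scalec r k := Cns (fun i => r * cc k i) (r * ca k) (cst k).
Definition zeroc := Cns (fun _ => 0) 0 false.

Inductive comb (l : list cns) : cns -> Prop :=
| comb0 : comb l zeroc
| combS k t r : List.In k l -> 0 < r -> comb l t -> comb l (addc (scalec r k) t).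

Lemma cns_ext k t : (forall i, cc k i = cc t i) -> ca k = ca t -> cst k = cst t -> k = t.
Proof.
case: k => c a s; case: t => c' a' s' /= Hc -> ->.
by rewrite (boolp.funext Hc).
Qed.

Lemma comb_one l k : List.In k l -> comb l k.
Proof.
move=> Hk; have -> : k = addc (scalec 1 k) zeroc.
  case: k Hk => c a s _; rewrite /addc /scalec /=; rewrite mul1r addr0 orbF.
  by congr Cns; apply: boolp.funext => i; rewrite mul1r addr0.
exact: (@combS l k zeroc 1 Hk ltr01 (comb0 l)).
Qed.

Lemma comb_add l t1 t2 : comb l t1 -> comb l t2 -> comb l (addc t1 t2).
Proof.
move=> H1 H2; elim: H1 => [|k t r Hk Hr Ht IH].
  have -> : addc zeroc t2 = t2.
    case: t2 {H2} => c a s; rewrite /addc /zeroc /= add0r.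
    by congr Cns; apply: boolp.funext => i; rewrite add0r.
  by [].
have -> : addc (addc (scalec r k) t) t2 = addc (scalec r k) (addc t t2).
  rewrite /addc /= addrA orbA; congr Cns; apply: boolp.funext => i.
  by rewrite addrA.
exact: combS.
Qed.

Lemma comb_scale l t r : 0 < r -> comb l t -> comb l (scalec r t).
Proof.
move=> Hr; elim => [|k t' r' Hk Hr' Ht IH].
  have -> : scalec r zeroc = zeroc.
    by apply: cns_ext => [i||] /=; rewrite ?mulr0.
  exact: comb0.
have -> : scalec r (addc (scalec r' k) t') = addc (scalec (r * r') k) (scalec r t').
  by apply: cns_ext => [i||] /=; rewrite ?mulrDr ?mulrA.
by apply: combS => //; exact: mulr_gt0.
Qed.

Lemma comb_trans l l' t : (forall k, List.In k l' -> comb l k) -> comb l' t -> comb l t.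
Proof.
move=> Hl; elim => [|k t' r Hk Hr Ht IH]; first exact: comb0.
by apply: comb_add => //; apply: comb_scale => //; exact: Hl.
Qed.

Lemma comb_cn l t n : (forall k, List.In k l -> cc k n = 0) -> comb l t -> cc t n = 0.
Proof.
move=> Hl; elim => [|k t' r Hk Hr Ht IH] //=.
by rewrite IH Hl // mulr0 addr0.
Qed.

Lemma max_in (A : Type) (s : list A) (f : A -> R) (x0 : A) :
  List.In x0 s -> exists x, List.In x s /\ forall y, List.In y s -> f y <= f x.
Proof.
elim: s x0 => [x0 []|a s IH x0 _].
case: s IH => [|b s] IH.
  by exists a; split; [left|move=> y [<-|[]]].
have [x [Hx Hmax]] := IH b (or_introl erefl).
case: (leP (f a) (f x)) => Hax.
  exists x; split; first by right.
  by move=> y [<-|Hy] //; exact: Hmax.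
exists a; split; first by left.
move=> y [<-|Hy] //; apply: le_trans (Hmax _ Hy) _; exact: ltW.
Qed.

Lemma choose_t (A : Type) (P N : list A) (L U : A -> R) (s : A -> bool) :
  (forall p q, List.In p P -> List.In q N ->
     if s p || s q then L q < U p else L q <= U p) ->
  exists t, (forall p, List.In p P -> if s p then t < U p else t <= U p) /\
            (forall q, List.In q N -> if s q then L q < t else L q <= t).
Proof.
move=> Hpq.
case: P Hpq => [|p1 P] Hpq.
  case: N Hpq => [|q1 N] Hpq.
    by exists 0; split.
  have [q0 [Hq0 Hm]] := @max_in _ _ L q1 (or_introl (erefl q1) : List.In q1 (q1 :: N)).
  exists (L q0 + 1); split => // q Hq.
  have := Hm _ Hq; case: (s q) => H; lra.
case: N Hpq => [|q1 N] Hpq.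
  have [p0 [Hp0 Hm]] := @max_in _ _ (fun p => - U p) p1 (or_introl (erefl p1) : List.In p1 (p1 :: P)).
  exists (U p0 - 1); split => // p Hp.
  have := Hm _ Hp; case: (s p) => /= H; lra.
have [q0 [Hq0 Hmq]] := @max_in _ _ L q1 (or_introl (erefl q1) : List.In q1 (q1 :: N)).
have [p0 [Hp0 Hmp]] := @max_in _ _ (fun p => - U p) p1 (or_introl (erefl p1) : List.In p1 (p1 :: P)).
have H00 : L q0 <= U p0 by have := Hpq _ _ Hp0 Hq0; case: (_ || _) => H //; exact: ltW.
exists ((L q0 + U p0) / 2); split.
  move=> p Hp; have := Hmp _ Hp; have := Hpq _ _ Hp Hq0 => /=.
  case: (s p) => /= H1 H2; lra.
move=> q Hq; have := Hmq _ Hq; have := Hpq _ _ Hp0 Hq => /=.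
case: (s q); rewrite ?orbT ?orbF => H1 H2; last lra.
lra.
Qed.
End FM.
Section FM2.
Variable R : realType.
Definition Zs n (l : list (cns R)) := List.filter (fun k => cc k n == 0) l.
Definition Ps n (l : list (cns R)) := List.filter (fun k => 0 < cc k n) l.
Definition Ns n (l : list (cns R)) := List.filter (fun k => cc k n < 0) l.
Definition pairc n (p q : cns R) := addc (scalec (- cc q n) p) (scalec (cc p n) q).
Definition red n l := Zs n l ++ List.flat_map (fun p => List.map (pairc n p) (Ns n l)) (Ps n l).

Lemma red_comb n l k : List.In k (red n l) -> comb l k.
Proof.
rewrite /red List.in_app_iff => -[/List.filter_In [Hk _]|]; first exact: comb_one.
move=> /List.in_flat_map [p [/List.filter_In [Hp Hp0] /List.in_map_iff [q [<- /List.filter_In [Hq Hq0]]]]].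
apply: comb_add; apply: comb_scale; try exact: comb_one.
  by rewrite oppr_gt0.
by [].
Qed.

Lemma red_cn n l k : List.In k (red n l) -> cc k n = 0.
Proof.
rewrite /red List.in_app_iff => -[/List.filter_In [_ /eqP //]|].
move=> /List.in_flat_map [p [_ /List.in_map_iff [q [<- _]]]] /=.
by rewrite mulNr [cc q n * _]mulrC addNr.
Qed.

Lemma dot_lin n (a b : R) f g d : dot n (fun i => a * f i + b * g i) d = a * dot n f d + b * dot n g d.
Proof. rewrite /dot !mulr_sumr -big_split; apply: eq_bigr => i _ /=; ring. Qed.

Lemma cval_pair n d p q : cval n d (pairc n p q) = - cc q n * cval n d p + cc p n * cval n d q.
Proof. rewrite /cval /= dot_lin; ring. Qed.

Lemma dot_split n c d (t0 : R) : dot n.+1 c (fun i => if i == n then t0 else d i) = dot n c d + c n * t0.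
Proof.
rewrite /dot big_ord_recr /= eqxx; congr (_ + _); apply: eq_bigr => i _.
by rewrite ltn_eqF.
Qed.

Lemma pos_case (c e t0 : R) : 0 < c -> e + c * t0 = c * (t0 - (- e / c)).
Proof. move=> Hc; field; exact: lt0r_neq0. Qed.
Lemma neg_case (c e t0 : R) : c < 0 -> e + c * t0 = (- c) * (e / (- c) - t0).
Proof. move=> Hc; field; rewrite ?oppr_eq0; exact: ltr0_neq0. Qed.
Lemma pair_case (cp cq ep eq : R) : 0 < cp -> cq < 0 ->
  eq / (-cq) - (- ep / cp) = (-cq * ep + cp * eq) / (cp * -cq).
Proof. move=> Hp Hq; have H1 := lt0r_neq0 Hp; have H2 := ltr0_neq0 Hq; field; rewrite ?oppr_eq0 ?H1 ?H2 ?andbT //. Qed.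

Lemma FM n : forall l : list (cns R), ~ (exists d, forall k, List.In k l -> sat n d k) ->
  exists t, comb l t /\ (forall i, (i < n)%N -> cc t i = 0) /\ bad t.
Proof.
elim: n => [|n IH] l Hl.
  have [k [Hk Hs]] : exists k, List.In k l /\ ~ sat 0 (fun _ => 0) k.
    apply: contrapT => Hc; apply: Hl; exists (fun _ => 0) => k Hk.
    by apply: contrapT => Hs; apply: Hc; exists k.
  exists k; split; first exact: comb_one.
  split => //.
  move: Hs; rewrite /sat /cval /dot big_ord0 addr0 /bad.
  case: (cst k) => Hs; [right; split=> //|left].
    by rewrite leNgt; apply/negP.
  by rewrite ltNge; apply/negP.
case: (boolp.pselect (exists d, forall k, List.In k (red n l) -> sat n d k)) => [[d Hd]|Hn]; last first.
  have [t [Ht [Hz Hb]]] := IH _ Hn.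
  exists t; split; first exact: comb_trans (@red_comb n l) Ht.
  split => // i; rewrite ltnS leq_eqVlt => /orP [/eqP ->|]; last exact: Hz.
  exact: comb_cn (@red_cn n l) Ht.
exfalso; apply: Hl.
destruct (@choose_t R _ (Ps n l) (Ns n l)
   (fun q => cval n d q / (- cc q n)) (fun p => - cval n d p / cc p n) (@cst R)) as [t0 [HP HN]].
  move=> p q Hp Hq.
  have Hpq : List.In (pairc n p q) (red n l).
    rewrite /red List.in_app_iff; right; apply/List.in_flat_map; exists p; split => //.
    by apply/List.in_map_iff; exists q.
  move: Hp Hq => /List.filter_In [_ Hp] /List.filter_In [_ Hq].
  have := Hd _ Hpq; rewrite /sat cval_pair /=.
  have Hpos : 0 < cc p n * - cc q n by rewrite mulr_gt0 // oppr_gt0.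
  case: (_ || _) => H.
    by rewrite -subr_lt0 pair_case // pmulr_llt0 ?invr_gt0.
  by rewrite -subr_le0 pair_case // pmulr_lle0 ?invr_gt0.
exists (fun i => if i == n then t0 else d i) => k Hk.
rewrite /sat /cval dot_split addrA.
case: (ltrgt0P (cc k n)) => Hc.
- have := HP k (proj2 (List.filter_In _ _ _) (conj Hk (introT idP Hc))).
  rewrite (pos_case _ _ Hc) pmulr_rlt0 // pmulr_rle0 // subr_lt0 subr_le0.
  by rewrite /cval.
- have := HN k (proj2 (List.filter_In _ _ _) (conj Hk (introT idP Hc))).
  have Hc' : 0 < - cc k n by rewrite oppr_gt0.
  rewrite (neg_case _ _ Hc) pmulr_rlt0 // pmulr_rle0 // subr_lt0 subr_le0.
  by rewrite /cval.
- have Hz : List.In k (red n l).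
    by rewrite /red List.in_app_iff; left; apply/List.filter_In; split => //; rewrite Hc eqxx.
  have := Hd _ Hz; rewrite /sat /cval Hc mul0r addr0.
  by [].
Qed.
End FM2.
Lemma in_In (T : eqType) (x : T) (s : seq T) : x \in s -> List.In x s.
Proof. elim: s => [//|y s IH]; rewrite inE => /orP [/eqP ->|/IH]; [by left|by right]. Qed.

Section Final.
Variables (R : realType) (n p m : nat).
Variables (vg : 'I_p -> 'rV[R]_n) (vh : 'I_m -> 'rV[R]_n) (a : 'I_p -> R) (b : 'I_m -> R).

Definition tofun (v : 'rV[R]_n) : nat -> R := fun k => oapp (fun i : 'I_n => v 0 i) 0 (insub k).
Lemma tofunE v (i : 'I_n) : tofun v i = v 0 i.
Proof. by rewrite /tofun valK. Qed.

Lemma dot_tofun v d : dot n (tofun v) d = dotv v (\row_(k < n) d k).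
Proof. by apply: eq_bigr => i _; rewrite mxE tofunE. Qed.

Lemma dotv_sum (I : finType) (c : I -> R) (w : I -> 'rV[R]_n) (d : 'rV[R]_n) :
  dotv (\sum_i c i *: w i) d = \sum_i c i * dotv (w i) d.
Proof.
rewrite /dotv (eq_bigr (fun k => \sum_i c i * (w i 0 k * d 0 k))); last first.
  move=> k _; rewrite summxE mulr_suml; apply: eq_bigr => i _; by rewrite mxE mulrA.
rewrite exchange_big; apply: eq_bigr => i _; by rewrite mulr_sumr.
Qed.

Lemma dotvD (u v d : 'rV[R]_n) : dotv (u + v) d = dotv u d + dotv v d.
Proof. rewrite /dotv -big_split; apply: eq_bigr => k _; by rewrite mxE mulrDl. Qed.

Lemma dotv0 (d : 'rV[R]_n) : dotv (0 : 'rV[R]_n) d = 0.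
Proof. rewrite /dotv big1 // => k _; by rewrite mxE mul0r. Qed.

Lemma sum_upd (I : finType) (f F : I -> R) i0 r :
  \sum_i (f i + (if i == i0 then r else 0)) * F i = \sum_i f i * F i + r * F i0.
Proof.
rewrite (eq_bigr (fun i => f i * F i + (if i == i0 then r else 0) * F i)); last first.
  by move=> i _; rewrite mulrDl.
rewrite big_split /=; congr (_ + _).
rewrite (bigD1 i0) //= eqxx big1 ?addr0 // => i /negbTE ->; by rewrite mul0r.
Qed.

Definition Bprop := forall (lg : 'I_p -> R) (lh : 'I_m -> R),
    \sum_(i < p) lg i *: vg i + \sum_(j < m) lh j *: vh j = 0 ->
    (forall i, 0 <= lg i) ->
    0 <= \sum_(i < p) lg i * a i + \sum_(j < m) lh j * b j ->
    (forall i, lg i = 0) /\ (forall j, lh j = 0).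

Definition Aprop := row_free (\matrix_(j < m) vh j) /\
    exists d : 'rV[R]_n,
      (forall i, a i + dotv (vg i) d < 0) /\
      (forall j, b j + dotv (vh j) d = 0).

Lemma mul_hmat (u : 'rV[R]_m) : u *m (\matrix_(j < m) vh j) = \sum_j u 0 j *: vh j.
Proof. rewrite mulmx_sum_row; apply: eq_bigr => j _; by rewrite rowK. Qed.

Lemma AtoB : Aprop -> Bprop.
Proof.
move=> [Hfree [d [Hg Hh]]] lg lh Hsum Hlg Hge.
have E := congr1 (fun v => dotv v d) Hsum; rewrite /= dotv0 dotvD !dotv_sum in E.
have Hb : \sum_j lh j * b j = - \sum_j lh j * dotv (vh j) d.
  rewrite -sumrN; apply: eq_bigr => j _.
  have -> : b j = - dotv (vh j) d by apply/eqP; rewrite -subr_eq0 opprK Hh.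
  by rewrite mulrN.
have HS : \sum_i lg i * (a i + dotv (vg i) d) = 0.
  apply/eqP; rewrite eq_le; apply/andP; split.
    apply: sumr_le0 => i _; apply: mulr_ge0_le0 => //; exact: ltW.
  move: Hge; rewrite Hb.
  have -> : \sum_i lg i * (a i + dotv (vg i) d) = \sum_i lg i * a i + \sum_i lg i * dotv (vg i) d.
    by rewrite -big_split; apply: eq_bigr => i _; rewrite mulrDr.
  move: E; set X := \sum_i lg i * dotv (vg i) d; set Y := \sum_j lh j * dotv (vh j) d.
  move=> E H; lra.
have Hlg0 : forall i, lg i = 0.
  move=> i.
  have P1 : forall k : 'I_p, xpredT k -> 0 <= - (lg k * (a k + dotv (vg k) d)).
    move=> k _; rewrite oppr_ge0; apply: mulr_ge0_le0 => //; exact: ltW.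
  have P2 : \sum_(k | xpredT k) - (lg k * (a k + dotv (vg k) d)) = 0.
    by rewrite sumrN HS oppr0.
  have := @psumr_eq0P R _ xpredT (fun i => - (lg i * (a i + dotv (vg i) d))) P1 P2 i erefl.
  move=> /eqP; rewrite oppr_eq0 mulf_eq0 => /orP [/eqP //|/eqP H].
  by have := Hg i; rewrite H ltxx.
split => //.
have Hu : (\row_j lh j) *m (\matrix_(j < m) vh j) = 0.
  have H0 : \sum_(i < p) lg i *: vg i = 0 by apply: big1 => i _; rewrite Hlg0 scale0r.
  rewrite mul_hmat -[X in _ = X]Hsum H0 add0r.
  by apply: eq_bigr => j _; rewrite mxE.
move: Hu; rewrite -(mul0mx _ (\matrix_(j < m) vh j)) => /(row_free_inj Hfree) Hu j.
by move/rowP: Hu => /(_ j); rewrite !mxE.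
Qed.

Definition lst : list (cns R) :=
  List.map (fun i => Cns (tofun (vg i)) (a i) true) (enum 'I_p) ++
  (List.map (fun j => Cns (tofun (vh j)) (b j) false) (enum 'I_m) ++
   List.map (fun j => Cns (fun k => - tofun (vh j) k) (- b j) false) (enum 'I_m)).

Lemma extract t : comb lst t -> exists lg lh,
  (forall i, 0 <= lg i) /\
  (forall k, cc t k = \sum_i lg i * tofun (vg i) k + \sum_j lh j * tofun (vh j) k) /\
  ca t = \sum_i lg i * a i + \sum_j lh j * b j /\
  (cst t -> exists i, 0 < lg i).
Proof.
elim => [|k0 t' r Hk Hr Ht [lg [lh [Hlg [Hc [Ha Hs]]]]]].
  exists (fun _ => 0), (fun _ => 0); split => //; split.
    by move=> k; rewrite /= !big1 ?addr0 // => i _; rewrite mul0r.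
  by split => //; rewrite /= !big1 ?addr0 // => i _; rewrite mul0r.
move: Hk; rewrite /lst !List.in_app_iff => -[|[]] /List.in_map_iff [i0 [<- _]].
- exists (fun i => lg i + (if i == i0 then r else 0)), lh; split.
    move=> i; apply: addr_ge0 => //; case: (i == i0) => //; exact: ltW.
  split; first by move=> k; rewrite /= Hc sum_upd; ring.
  split; first by rewrite /= Ha sum_upd; ring.
  move=> _; exists i0; rewrite eqxx; have := Hlg i0; lra.
- exists lg, (fun j => lh j + (if j == i0 then r else 0)); split => //.
  split; first by move=> k; rewrite /= Hc sum_upd; ring.
  split; first by rewrite /= Ha sum_upd; ring.
  by [].
- exists lg, (fun j => lh j + (if j == i0 then - r else 0)); split => //.
  split; first by move=> k; rewrite /= Hc sum_upd; ring.
  split; first by rewrite /= Ha sum_upd; ring.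
  by [].
Qed.

Lemma BtoA : Bprop -> Aprop.
Proof.
move=> HB; split.
  apply: inj_row_free => u Hu.
  have Hs : forall c : R, \sum_(i < p) (fun _ => 0) i *: vg i + \sum_(j < m) (c * u 0 j) *: vh j = 0.
    move=> c; rewrite big1 ?add0r; last by move=> i _; rewrite scale0r.
    have E := congr1 (fun v => c *: v) Hu; rewrite /= mul_hmat scaler_sumr scaler0 in E.
    rewrite -[X in _ = X]E.
    by apply: eq_bigr => j _; rewrite scalerA.
  have Hz : forall c : R, 0 <= \sum_(j < m) (c * u 0 j) * b j -> forall j, c * u 0 j = 0.
    move=> c Hc.
    have Hc' : 0 <= \sum_(i < p) (fun _ => 0) i * a i + \sum_(j < m) (c * u 0 j) * b j.
      by rewrite big1 ?add0r // => i _; rewrite mul0r.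
    by have [_ H] := HB _ _ (Hs c) (fun _ => lexx 0) Hc'.
  apply/rowP => j; rewrite mxE.
  case: (lerP 0 (\sum_(j < m) (1 * u 0 j) * b j)) => H.
    by have := Hz 1 H j; rewrite mul1r.
  have H' : 0 <= \sum_(j < m) (-1 * u 0 j) * b j.
    rewrite (eq_bigr (fun j => - ((1 * u 0 j) * b j))); last by move=> k _; rewrite !mulNr.
    rewrite sumrN oppr_ge0; exact: ltW.
  by have := Hz (-1) H' j; rewrite mulN1r => /eqP; rewrite oppr_eq0 => /eqP.
case: (boolp.pselect (exists d, forall k, List.In k lst -> sat n d k)) => [[d Hd]|Hn].
  exists (\row_(k < n) d k); split.
    move=> i; have := Hd (Cns (tofun (vg i)) (a i) true).
    rewrite /sat /cval /= dot_tofun; apply; rewrite /lst List.in_app_iff; left.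
    by apply/List.in_map_iff; exists i; split => //; apply: in_In; rewrite mem_enum.
  move=> j.
  have H1 := Hd (Cns (tofun (vh j)) (b j) false).
  have H2 := Hd (Cns (fun k => - tofun (vh j) k) (- b j) false).
  move: H1 H2; rewrite /sat /cval /= dot_tofun.
  have -> : dot n (fun k => - tofun (vh j) k) d = - dotv (vh j) (\row_(k < n) d k).
    by rewrite -dot_tofun /dot -sumrN; apply: eq_bigr => k _; rewrite mulNr.
  have Hj : List.In j (enum 'I_m) by apply: in_In; rewrite mem_enum.
  move=> H1 H2; have {}H1 := H1 _; have {}H2 := H2 _.
  apply/eqP; rewrite eq_le H1; last first.
    by rewrite /lst !List.in_app_iff; right; left; apply/List.in_map_iff; exists j.
  rewrite -oppr_le0 opprD; apply: H2.
  by rewrite /lst !List.in_app_iff; right; right; apply/List.in_map_iff; exists j.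
exfalso.
have [t [Ht [Hz Hb]]] := FM Hn.
have [lg [lh [Hlg [Hc [Ha Hs]]]]] := extract Ht.
have Hsum : \sum_(i < p) lg i *: vg i + \sum_(j < m) lh j *: vh j = 0.
  apply/rowP => k; rewrite !mxE !summxE; transitivity (cc t k); last exact: Hz.
  rewrite Hc.
  by congr (_ + _); apply: eq_bigr => i _; rewrite mxE tofunE.
have Hge : 0 <= ca t by case: Hb => [/ltW|[]].
rewrite Ha in Hge.
have [H1 H2] := HB _ _ Hsum Hlg Hge.
have Ha0 : ca t = 0.
  by rewrite Ha !big1 ?addr0 // => i _; rewrite ?H1 ?H2 mul0r.
case: Hb => [|[Hst _]]; first by rewrite Ha0 ltxx.
by have [i] := Hs Hst; rewrite H1 ltxx.
Qed.
End Final.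
Unset Implicit Arguments. Set Strict Implicit.

Theorem theorem2p2 (R : realType) (n p m : nat)
  (g : 'I_p -> 'rV[R]_n -> R) (h : 'I_m -> 'rV[R]_n -> R)
  (gs : 'I_p -> R -> 'rV[R]_n -> R) (hs : 'I_m -> R -> 'rV[R]_n -> R)
  (x : nat -> 'rV[R]_n) (rho : nat -> R) (xbar : 'rV[R]_n) :
  (forall i, locally_lipschitz (g i)) ->
  (forall j, locally_lipschitz (h j)) ->
  (forall i, smoothing_family (gs i) (g i)) ->
  (forall j, smoothing_family (hs j) (h j)) ->
  (forall k, 0 < rho k) ->
  (forall k, rho k <= rho k.+1) ->
  (forall M : R, exists N : nat, forall k, (N <= k)%N -> M < rho k) ->
  accumulation_point x xbar ->
  (EWGMFCQ g h gs hs x rho xbar <-> EWNNAMCQ g h gs hs x rho xbar).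
Proof.
move=> _ _ _ _ _ _ _ _; split => H K0 K vg vh Hadm.
  exact: (@AtoB R n p m vg vh (fun i => g i xbar) (fun j => h j xbar) (H _ _ _ _ Hadm)).
exact: (@BtoA R n p m vg vh (fun i => g i xbar) (fun j => h j xbar) (H _ _ _ _ Hadm)).
Qed.
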